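(* Let $G$ be a finite simple graph with edge weight function $w$ and vertex weight function $w_1$. Then all roots of $\eta_{(w,w_1)}(G,x)$ are real.
   Context: An edge weight function $w$ assigns a nonzero complex number to each edge; a vertex weight function $w_1$ assigns a real number (possibly $0$) to each vertex; induced subgraphs carry restricted weights. For $A\subseteq E(G)$, $w(A)=\prod_{e\in A}w(e)$. $\mu_w(G,x)=\sum_{M}(-1)^{|M|}|w(M)|^2x^{n-2|M|}$ over all matchings $M$ of $G$ (including empty), $n=|V(G)|$. $\eta_{(w,w_1)}(G,x)=\sum_{S\subseteq V(G)}(-1)^{|V(G)\setminus S|}\big(\prod_{v\in V(G)\setminus S}w_1(v)\big)\mu_w(G[S],x)$ with $G[S]$ the induced subgraph and $\mu_w$ of the empty graph equal to $1$. *)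

(* Defs.v *)
From HB Require Import structures.
From mathcomp Require Import all_boot all_order all_algebra.
Set Implicit Arguments. Unset Strict Implicit. Unset Printing Implicit Defensive.
Import Order.TTheory GRing.Theory Num.Theory.
Local Open Scope ring_scope.

Section Eta.
Variables (C : numClosedFieldType) (T : finType).

Definition edges (e : rel T) : {set {set T}} :=
  [set A : {set T} | [exists x, exists y, e x y && (A == [set x; y])]].

Definition is_matching (e : rel T) (S : {set T}) (M : {set {set T}}) : bool :=
  [&& M \subset edges e, trivIset M & cover M \subset S].

Definition mu_w (e : rel T) (w : {set T} -> C) (S : {set T}) : {poly C} :=
  \sum_(M : {set {set T}} | is_matching e S M)
    ((-1) ^+ #|M| * \prod_(A in M) `|w A| ^+ 2)%:P * 'X^(#|S| - 2 * #|M|).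

Definition eta_w (e : rel T) (w : {set T} -> C) (w1 : T -> C) : {poly C} :=
  \sum_(S : {set T})
    ((-1) ^+ #|~: S| * \prod_(v in ~: S) w1 v)%:P * mu_w e w S.

End Eta.

(* Main.v *)
Require Import Defs.
From HB Require Import structures.
From mathcomp Require Import all_boot all_order all_algebra.
From mathcomp Require Import ring.
Set Implicit Arguments. Unset Strict Implicit. Unset Printing Implicit Defensive.
Import Order.TTheory GRing.Theory Num.Theory.
Local Open Scope ring_scope.

Section Comb.
Variables (C : numClosedFieldType) (T : finType) (e : rel T).
Hypotheses (e_sym : symmetric e) (e_irr : irreflexive e).
Variables (w : {set T} -> C) (w1 : T -> C).

Lemma edgesP A : reflect (exists x y, e x y /\ A = [set x; y]) (A \in edges e).
Proof.
rewrite inE; apply: (iffP existsP) => [[x /existsP[y /andP[exy /eqP->]]]|[x [y [exy ->]]]].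
  by exists x, y.
by exists x; apply/existsP; exists y; rewrite exy eqxx.
Qed.

Lemma edge_card A : A \in edges e -> #|A| = 2%N.
Proof.
move/edgesP=> [x [y [exy ->]]]; rewrite cards2.
case: eqP => // exy'; by rewrite exy' e_irr in exy.
Qed.

Lemma edge_pair u v : [set u; v] \in edges e -> e u v.
Proof.
move/edgesP=> [a [b [eab H]]].
have hu : u \in [set a; b] by rewrite -H !inE eqxx.
have hv : v \in [set a; b] by rewrite -H !inE eqxx orbT.
have ha : a \in [set u; v] by rewrite H !inE eqxx.
have hb : b \in [set u; v] by rewrite H !inE eqxx orbT.
move: hu hv ha hb; rewrite !inE.
case/orP=> /eqP-> ; case/orP=> /eqP-> //.
- move=> _ hb; have eba : b = a by case/orP: hb => /eqP.
  by rewrite eba e_irr in eab.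
- by rewrite e_sym.
- move=> ha _; have eab' : a = b by case/orP: ha => /eqP.
  by rewrite eab' e_irr in eab.
Qed.

Lemma matE S M : is_matching e S M = is_matching e setT M && (cover M \subset S).
Proof. by rewrite /is_matching subsetT andbT andbA. Qed.

Lemma cover_card (M : {set {set T}}) : M \subset edges e -> trivIset M -> #|cover M| = (2 * #|M|)%N.
Proof.
move=> /subsetP sub /eqP <-.
rewrite (eq_bigr (fun _ => 2%N)); last by move=> A /sub; exact: edge_card.
by rewrite sum_nat_const mulnC.
Qed.

Lemma set0_notin (M : {set {set T}}) : M \subset edges e -> set0 \notin M.
Proof.
move=> /subsetP sub; apply/negP=> /sub/edge_card; by rewrite cards0.
Qed.


Lemma subset_expand (K : {set T}) (x : C) :
  \prod_(v in ~: K) (x - w1 v) =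
  \sum_(S : {set T} | K \subset S)
     ((-1) ^+ #|~: S| * \prod_(v in ~: S) w1 v) * x ^+ (#|S| - #|K|).
Proof.
pose a v := if v \in K then 1 else x.
pose b v := if v \in K then 0 else - w1 v.
have -> : \prod_(v in ~: K) (x - w1 v) = \prod_v (a v + b v).
  symmetry; rewrite (bigID (mem K)) /= big1 ?mul1r; last first.
    by move=> v vK; rewrite /a /b vK addr0.
  apply: eq_big => v; first by rewrite inE.
  by rewrite /a /b => /negbTE ->.
transitivity (\sum_(J in {set T}) \prod_i (if i \in J then a i else b i)).
  exact: bigA_distr.
rewrite (bigID (fun J : {set T} => K \subset J)) /=.
rewrite [X in _ + X]big1 ?addr0; last first.
  move=> J /subsetPn [v vK vJ].
  by rewrite (bigD1 v) //= (negbTE vJ) /b vK mul0r.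
apply: eq_big => J; first by [].
move=> sKJ.
rewrite (bigID (mem J)) /=.
have -> : \prod_(i | true && (i \in J)) (if i \in J then a i else b i) = x ^+ (#|J| - #|K|).
  rewrite (eq_bigr a); last by move=> v /= ->.
  rewrite (bigID (mem K)) /= big1 ?mul1r; last by move=> v /andP[_ vK]; rewrite /a vK.
  rewrite (eq_bigr (fun _ => x)); last by move=> v /andP[_ vK]; rewrite /a (negbTE vK).
  rewrite prodr_const; congr (x ^+ _).
  rewrite -{2}(setIidPr sKJ) -cardsD; apply: eq_card => v.
  by rewrite !inE andbC.
rewrite mulrC; congr (_ * _).
rewrite -prodrN; apply: eq_big => v; first by rewrite inE.
move=> /negbTE vJ; rewrite vJ /b; case: ifP => // vK.
by move/subsetP: sKJ => /(_ v vK); rewrite vJ.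
Qed.


Definition fM (S : {set T}) (M : {set {set T}}) (x : C) :=
  (-1) ^+ #|M| * \prod_(A in M) `|w A| ^+ 2 * \prod_(v in S :\: cover M) (x - w1 v).
Definition val (S : {set T}) (x : C) :=
  \sum_(M : {set {set T}} | is_matching e S M) fM S M x.

Lemma eta_val x : (eta_w e w w1).[x] = val setT x.
Proof.
rewrite /eta_w horner_sum.
under eq_bigr do rewrite hornerCM /mu_w horner_sum big_distrr /=.
under eq_bigr => S _ do under eq_bigr do rewrite hornerCM hornerXn.
under eq_bigr => S _ do rewrite (eq_bigl (fun M => is_matching e setT M && (cover M \subset S))
   _ (fun M => matE S M)).
rewrite (exchange_big_dep (is_matching e setT)) /=; last by move=> S M _ /andP[].
apply: eq_bigr => M mM.
have cc : #|cover M| = (2 * #|M|)%N by case/and3P: mM => sub tr _; exact: cover_card.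
rewrite /fM setTD subset_expand big_distrr /=.
apply: eq_big => S; first by rewrite mM.
move=> _; rewrite cc; exact: mulrCA.
Qed.


Lemma val_rec (S : {set T}) (u : T) (x : C) : u \in S ->
  val S x = (x - w1 u) * val (S :\ u) x
            - \sum_(v in S | e u v) `|w [set u; v]| ^+ 2 * val (S :\ u :\ v) x.
Proof.
move=> uS.
rewrite /val (bigID (fun M => u \in cover M)) /= addrC.
congr (_ + _).
  rewrite big_distrr /=; apply: eq_big => M.
    by rewrite (matE S M) (matE (S :\ u) M) subsetD1 andbA.
  move=> /andP[mM uM]; rewrite /fM (bigD1 u) /=; last by rewrite inE uS uM.
  rewrite (eq_bigl (mem ((S :\ u) :\: cover M))); last first.
    move=> v; rewrite !inE.
    by case: (v == u); case: (v \in S); case: (v \in cover M).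
  exact: mulrCA.
transitivity (\sum_M \sum_v
   (if is_matching e S M && ([set u; v] \in M) then fM S M x else 0)).
  rewrite big_mkcond; apply: eq_bigr => M _ /=.
  case: ifP => [/andP[mM uM] | nc].
    case/and3P: (mM) => sub tr cov.
    have [A AM uA] : exists2 A, A \in M & u \in A by apply/bigcupP.
    have /edgesP[a [b [eab EA]]] : A \in edges e by apply: (subsetP sub).
    have [y [Ay uy]] : exists y, A = [set u; y] /\ u != y.
      move: uA; rewrite EA !inE => /orP[]/eqP->.
        exists b; split => //; apply/eqP => ab; by rewrite ab e_irr in eab.
      exists a; split; first exact: setUC.
      apply/eqP => ab; by rewrite ab e_irr in eab.
    rewrite (bigD1 y) //= mM -Ay AM /= big1 ?addr0 // => v vy.
    case: ifP => // uvM.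
    have eqA : [set u; v] = A.
      apply/eqP; apply/negPn/negP => neq.
      have := elimT trivIsetP tr _ _ uvM AM neq.
      rewrite -setI_eq0 => /eqP/setP/(_ u).
      by rewrite !inE eqxx uA.
    have : v \in A by rewrite -eqA !inE eqxx orbT.
    rewrite Ay !inE (negbTE vy) orbF => /eqP vu.
    have : y \in [set u; v] by rewrite eqA Ay !inE eqxx orbT.
    by rewrite vu !inE orbb eq_sym (negbTE uy).
  rewrite big1 // => v _; case: ifP => // /andP[mM uvM].
  move: nc; rewrite mM /= => /negbT/negP; case.
  by apply/bigcupP; exists [set u; v]; rewrite // !inE eqxx.
rewrite exchange_big /= -sumrN; symmetry; rewrite big_mkcond; symmetry.
apply: eq_bigr => v _.
case: ifP => [/andP[vS euv] | nv]; last first.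
  apply: big1 => M _; case: ifP => // /andP[mM uvM].
  case/and3P: mM => sub tr cov.
  have euv := edge_pair (subsetP sub _ uvM).
  have vS : v \in S.
    by apply: (subsetP cov); apply/bigcupP; exists [set u; v]; rewrite // !inE eqxx orbT.
  by rewrite vS euv in nv.
rewrite -big_mkcond /=.
set uv := [set u; v].
have uvE : uv \in edges e by apply/edgesP; exists u, v.
rewrite (reindex_onto (fun M' => uv |: M') (fun M => M :\ uv)) /=; last first.
  by move=> M /andP[_ uvM]; rewrite setD1K.
rewrite big_distrr -sumrN /=.
apply: eq_big => M'.
  apply/idP/idP.
    move=> /andP[/andP[mM _] /eqP <-].
    case/and3P: mM => sub tr cov.
    apply/and3P; split.
    - exact: subset_trans (subD1set _ _) sub.
    - exact: trivIsetS (subD1set _ _) tr.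
    - rewrite coverD1 ?setU11 //; apply/subsetP => z; rewrite !inE => /andP[zuv zc].
      have zS := subsetP cov z zc.
      by move: zuv; rewrite negb_or => /andP[-> ->]; rewrite zS.
  move=> mM'.
  case/and3P: (mM') => sub tr cov.
  have uvM' : uv \notin M'.
    apply/negP => h.
    have : u \in cover M' by apply/bigcupP; exists uv => //; rewrite /uv !inE eqxx.
    by move/(subsetP cov); rewrite !inE eqxx /= andbF.
  rewrite setU1K // eqxx andbT setU11 andbT.
  apply/and3P; split.
  - by rewrite subUset sub1set uvE sub.
  - have dis : {in M', forall B : {set T}, [disjoint uv & B]}; last first.
      by case: (trivIsetU1 dis tr (set0_notin sub)).
    move=> B BM'.
    rewrite -setI_eq0; apply/eqP/setP => z; rewrite !inE.
    case zB: (z \in B); rewrite ?andbF // andbT.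
    have : z \in cover M' by apply/bigcupP; exists B.
    by move/(subsetP cov); rewrite !inE => /and3P[zv zu _]; rewrite (negbTE zu) (negbTE zv).
  - rewrite /cover big_setU1 //= subUset; apply/andP; split.
      by apply/subsetP => z; rewrite !inE => /orP[]/eqP->.
    by apply: subset_trans cov _; apply/subsetP=> z; rewrite !inE => /and3P[_ _ ->].
move=> /andP[_ /eqP eqM].
have uvM' : uv \notin M' by rewrite -eqM setD11.
rewrite /fM.
have -> : S :\: cover (uv |: M') = S :\ u :\ v :\: cover M'.
  rewrite /cover big_setU1 //=; apply/setP => z; rewrite !inE.
  by case: (z == u); case: (z == v); case: (z \in S); case: (z \in \bigcup_(B in M') B).
rewrite cardsU1 uvM' big_setU1 //= add1n exprS mulN1r !mulNr; congr (- _).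
by rewrite mulrCA !mulrA.
Qed.


Lemma val0 x : val set0 x = 1.
Proof.
rewrite /val (big_pred1 set0); last first.
  move=> M /=; apply/idP/eqP => [|->].
    case/and3P => sub _ cov; apply/eqP; rewrite -subset0; apply/subsetP => A AM.
    have : A \subset set0 by apply: subset_trans cov; exact: bigcup_sup.
    rewrite subset0 => /eqP A0; have := edge_card (subsetP sub _ AM).
    by rewrite A0 cards0.
  by rewrite /is_matching sub0set /trivIset /cover !big_set0 cards0 sub0set.
by rewrite /fM cards0 expr0 big_set0 set0D big_set0 !mulr1.
Qed.

Hypothesis w1r : forall v, w1 v \is Num.real.

Lemma val_conj S x : val S x^* = (val S x)^*.
Proof.
rewrite /val rmorph_sum; apply: eq_bigr => M _.
rewrite /fM !rmorphM rmorphXn rmorphN1 !rmorph_prod; congr (_ * _ * _).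
  apply: eq_bigr => A _; transitivity ((`|w A| ^+ 2)^*) => //.
  by rewrite conj_Creal // rpredX // normr_real.
apply: eq_bigr => v _; transitivity ((x - w1 v)^*) => //.
rewrite rmorphB; congr (_ - _); symmetry; exact: (conj_Creal (w1r v)).
Qed.

Lemma stable x : 0 < 'Im x -> forall n (S : {set T}), (#|S| <= n)%N ->
  val S x != 0 /\ forall u, u \in S -> 0 < 'Im (val S x / val (S :\ u) x).
Proof.
move=> Imx; elim=> [|n IH] S cS.
  have -> : S = set0 by apply/eqP; rewrite -cards_eq0 -leqn0.
  by rewrite val0 oner_eq0; split => // u; rewrite inE.
have ratio : forall u, u \in S -> 0 < 'Im (val S x / val (S :\ u) x).
  move=> u uS.
  have cSu : (#|S :\ u| <= n)%N by move: cS; rewrite (cardsD1 u S) uS add1n ltnS.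
  have [h0 hr] := IH _ cSu.
  rewrite (val_rec x uS) mulrBl mulrAC (mulfVK h0) mulr_suml raddfB /=.
  rewrite raddf_sum /=.
  rewrite raddfB /= (Creal_ImP _ (w1r u)) subr0.
  apply: (lt_le_trans Imx).
  rewrite -sumrN lerDl.
  apply: sumr_ge0 => v /andP[vS euv].
  have vSu : v \in S :\ u.
    rewrite !inE vS andbT; apply/eqP => vu; by rewrite vu e_irr in euv.
  have hv := hr v vSu.
  rewrite -mulrA ImMl ?rpredX ?normr_real // -mulrN mulr_ge0 ?exprn_ge0 ?normr_ge0 //.
  rewrite -invf_div ImV mulNr opprK divr_ge0 ?exprn_ge0 ?normr_ge0 //.
  exact: ltW.
split=> //.
case: (set_0Vmem S) => [->|[u uS]]; first by rewrite val0 oner_eq0.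
apply/eqP => h; have := ratio u uS; by rewrite h mul0r raddf0 ltxx.
Qed.

End Comb.

Theorem corollary3p4 (C : numClosedFieldType) (T : finType) (e : rel T)
  (e_sym : symmetric e) (e_irr : irreflexive e)
  (w : {set T} -> C) (w_nz : forall A, A \in edges e -> w A != 0)
  (w1 : T -> C) (w1_real : forall v, w1 v \is Num.real) :
  forall z : C, root (eta_w e w w1) z -> z \is Num.real.
Proof.
move=> z /eqP; rewrite (eta_val e_irr w w1) => hz.
apply/Creal_ImP; apply/eqP; apply/negP => nz.
have /orP[Ineg|Ipos] : ('Im z < 0) || (0 < 'Im z).
  by rewrite -real_neqr_lt ?Creal_Im ?real0 //; exact/negP.
  have hc : 0 < 'Im z^* by rewrite Im_conj oppr_gt0.
  have [] := stable e_sym e_irr w w1_real hc (leqnn #|[set: T]|).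
  by rewrite (val_conj _ _ w1_real) hz conjC0 eqxx.
have [] := stable e_sym e_irr w w1_real Ipos (leqnn #|[set: T]|).
by rewrite hz eqxx.
Qed.
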